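(* Let $d\ge3$, $\{\mathbb{P}^u\}$ satisfy (P1), (P2), (D), (S1), (S2), fix $u$, and let $A\subseteq \mathbb{R}^d$ be compact and $(b_N)$ positive reals. Let $\omega\in\Omega^{1/3,1/9}_{\mathrm{reg}}$. There exists a constant $c_4(\omega)$ and for each $\chi\in(0,1)$ a constant $c_5(\chi)>0$ such that: for integers $N\ge1$, $\ell_*\ge0$, $U_0\in\mathcal U^\omega_{\ell_*,N}$, $\epsilon\in\mathbb{N}$, $\chi\in(0,1)$, $\Sigma\in\mathcal S^\omega_{U_0,\epsilon,\chi}$, if $\ell\ge c_4(\omega)$ with $\epsilon\le\frac14 2^\ell$, $x_0\in\mathcal S_\infty\cap B(0,r_{1/3,4\cdot2^\ell})$ with $\widetilde\sigma^\omega_\ell(x_0)\in[\widetilde\alpha,1-\widetilde\alpha]$, and $y\in\mathcal S_\infty$ with $|y-x_0|\le\frac14 2^\ell$, then $$P^\omega_y[H_\Sigma<T_{B(x_0,5\cdot2^\ell)}]\ge c_5(\chi).$$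
   Context: Framework: $\Omega=\{0,1\}^{\mathbb{Z}^d}$, $\mathcal S=\{x:\omega(x)=1\}$, $\mathcal S_\infty$ vertices of infinite nearest-neighbour components, $B(x,r)$ closed $\ell^\infty$-ball in $\mathbb{Z}^d$, $|\cdot|$ Euclidean norm; assumptions (P1) ergodicity, (P2) monotonicity, (D) sprinkled decoupling, (S1) local uniqueness with rate $\ge(\log R)^{1+\Delta_S(u)}$, (S2) $\eta=\eta(u)=\mathbb{P}^u[0\in\mathcal S_\infty]>0$ continuous. $P^\omega_x$: continuous-time constant-speed simple random walk on $\mathcal S_\infty$; $H_U=\inf\{t\ge0:X_t\in U\}$, $T_U=\inf\{t\ge0:X_t\notin U\}$, $\tau_r=\inf\{t\ge0:|X_t-X_0|_\infty\ge r\}$. $r_{\alpha,R}=\exp(\kappa_{\mathrm{reg}}(\alpha)(\log R)^{1+\Delta_S})$ with $\kappa_{\mathrm{reg}}(\alpha)=\frac1{2d}(\kappa_{d2}(\alpha)\wedge c_{hk6})$. $\Omega^{\alpha,\vartheta}_{\mathrm{reg}}$: configurations with $\mathcal S_\infty$ nonempty connected and finite minimal scales $R_{\mathrm{den}}(\omega,\alpha)$ (volume regularity $(1-\alpha)\eta\le|\mathcal S_\infty\cap B(x,R)|/|B(x,R)|\le(1+\alpha)\eta$ for all $R\ge R_{\mathrm{den}}$, $x\in\mathcal S_\infty\cap B(0,r_{\alpha,R})$), $R_{\mathrm{hk}}(\omega,\alpha)$ (two-sided Gaussian heat kernel bound for all $R\ge R_{\mathrm{hk}}$, $x\in\mathcal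 S_\infty\cap B(0,2r_{\alpha,R})$, $y\in\mathcal S_\infty$, $t\ge R\vee|x-y|_1^{3/2}$), and $R_{\mathrm{khk}}(\omega,\alpha,\vartheta)$ (for integers $R\ge R_{\mathrm{khk}}$, $P^\omega_x[X_t=y,T_{B(x_0,R)\cap\mathcal S_\infty}>t]/\mu_y\ge c_{khk1}(\vartheta)t^{-d/2}$ for $x_0\in\mathcal S_\infty\cap B(0,r_{\alpha,R})$, $x,y\in\mathcal S_\infty\cap B(x_0,(1-\vartheta)R)$, $c_{khk2}(\vartheta)R^2\le t\le R^2$, $\mu_y$ degree in $\mathcal S_\infty$). Sets: $A_N=(NA)\cap\mathbb{Z}^d$; $U_1=\mathcal S_\infty\setminus U_0$; $S$ = points of $U_1$ adjacent to $U_0$; $\sigma^\omega_\ell(x)=\frac{|B(x,2^\ell)\cap U_1|}{|B(x,2^\ell)\cap\mathcal S_\infty|}$, $\widetilde\sigma^\omega_\ell(x)=\frac{|B(x,4\cdot2^\ell)\cap U_1|}{|B(x,4\cdot2^\ell)\cap\mathcal S_\infty|}$; $\widetilde\alpha=\frac3{10}4^{-d}$; $\mathcal U^\omega_{\ell_*,N}$: $U_0\subseteq B(0,b_N)\cap\mathcal S_\infty$ with $\sigma^\omega_\ell(x)\le\frac12$ for all $x\in A_N\cap\mathcal S_\infty$, $\ell\le\ell_*$; $\mathcal S^\omega_{U_0,\epsilon,\chi}$: bounded $\Sigma\subseteq\mathcal S_\infty$ with $P^\omega_x[H_\Sigma<\tau_\epsilon]\ge\chi$ for all $x\in S$. *)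

(* Defs.v *)
From HB Require Import structures.
From mathcomp Require Import all_boot all_order all_algebra.
From mathcomp Require Import all_classical all_reals all_analysis.
From mathcomp Require Import finmap.
Set Implicit Arguments. Unset Strict Implicit. Unset Printing Implicit Defensive.
Import Order.TTheory GRing.Theory Num.Theory.
Import numFieldNormedType.Exports.
Local Open Scope classical_set_scope.
Local Open Scope ring_scope.

Definition pt (d : nat) := 'rV[int]_d.
Definition config (d : nat) := pt d -> bool.

Section Defs.
Context {R : realType}.
Context {d : nat}.
Implicit Types (x y z : pt d) (om : config d).

Definition emb x : 'rV[R]_d := map_mx (fun k : int => k%:~R) x.

Definition linf (v : pt d) : R := \big[Num.max/0]_(i < d) (`|v ord0 i|)%:~R.
Definition l1 (v : pt d) : R := \sum_(i < d) (`|v ord0 i|)%:~R.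
Definition l2 (v : pt d) : R := Num.sqrt (\sum_(i < d) ((v ord0 i) ^+ 2)%:~R).

Definition ball_inf x (r : R) : set (pt d) := [set z | linf (z - x) <= r].

Definition nbrs x : seq (pt d) :=
  [seq x + s *: delta_mx ord0 i | i <- enum 'I_d, s <- [:: 1%R; (-1)%R]].
Definition adj : rel (pt d) := fun x y => y \in nbrs x.

Definition card (A : set (pt d)) : R := ((#|` fset_set A |)%fset)%:R.

(** S = open sites; connectivity inside S; infinite cluster S_infty *)
Definition conn om x y : Prop :=
  exists p : seq (pt d), [/\ path adj x p, all om (x :: p) & last x p = y].
Definition Sinf om : set (pt d) :=
  [set x | om x /\ ~ finite_set [set y | conn om x y]].

(** degree mu_x in S_infty, and one step of the (jump chain of the) constant-speed walk *)
Definition deg om x : R := (count (fun z => `[< Sinf om z >]) (nbrs x))%:R.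
Definition avg om (f : pt d -> R) x : R :=
  (\sum_(z <- nbrs x | `[< Sinf om z >]) f z) / deg om x.

(** hitn om U Sig n x = P_x[ exists k <= n, X_k in Sig and X_j in U for all j <= k ]
    for the jump chain started at x. *)
Fixpoint hitn om (U Sig : set (pt d)) (n : nat) (x : pt d) : R :=
  match n with
  | 0 => if `[< U x /\ Sig x >] then 1 else 0
  | n'.+1 => if `[< U x >] then (if `[< Sig x >] then 1 else avg om (hitn om U Sig n') x)
             else 0
  end.
(** P_x[ H_Sig < T_U ] *)
Definition hitprob om (U Sig : set (pt d)) x : R :=
  sup [set hitn om U Sig n x | n in [set: nat]].

(** killn om U n x y = P_x[ X_n = y, X_j in U for all j <= n ] (jump chain) *)
Fixpoint killn om (U : set (pt d)) (n : nat) (x y : pt d) : R :=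
  match n with
  | 0 => if `[< U x /\ x = y >] then 1 else 0
  | n'.+1 => if `[< U x >] then avg om (fun z => killn om U n' z y) x else 0
  end.
(** continuous-time constant-speed walk: P_x[ X_t = y, T_U > t ] (Poissonisation) *)
Definition qkill om (U : set (pt d)) (t : R) x y : R :=
  limn (series (fun n => expR (- t) * t ^+ n / (n`!)%:R * killn om U n x y)).
Definition qt om (t : R) x y : R := qkill om [set: pt d] t x y.

Definition rscale (kreg DeltaS : R) (Rr : R) : R :=
  expR (kreg * powR (ln Rr) (1 + DeltaS)).

Definition origin : pt d := 0.

(** Omega_reg^{alpha,theta}, with the paper's constants passed as parameters:
    eta = eta(u), kreg = kappa_reg(alpha), chk1..chk4 heat-kernel constants,
    ckhk1 = c_khk1(theta), ckhk2 = c_khk2(theta). *)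
Definition Omega_reg (eta DeltaS kreg chk1 chk2 chk3 chk4 ckhk1 ckhk2 alpha theta : R)
    om : Prop :=
  let r := rscale kreg DeltaS in
  [/\ Sinf om !=set0,
      (forall x y, Sinf om x -> Sinf om y -> conn om x y),
      (exists R0 : R, forall Rr : R, R0 <= Rr -> forall x,
          Sinf om x -> ball_inf origin (r Rr) x ->
          (1 - alpha) * eta <= card (Sinf om `&` ball_inf x Rr) / card (ball_inf x Rr)
          <= (1 + alpha) * eta),
      (exists R0 : R, forall Rr : R, R0 <= Rr -> forall x y (t : R),
          Sinf om x -> ball_inf origin (2 * r Rr) x -> Sinf om y ->
          Num.max Rr (powR (l1 (x - y)) (3 / 2)) <= t ->
          chk1 * powR t (- (d%:R / 2)) * expR (- chk2 * (l1 (x - y)) ^+ 2 / t)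
            <= qt om t x y / deg om y
          <= chk3 * powR t (- (d%:R / 2)) * expR (- chk4 * (l1 (x - y)) ^+ 2 / t))
    &
      (exists R0 : nat, forall Rn : nat, (R0 <= Rn)%N -> forall x0 x y (t : R),
          Sinf om x0 -> ball_inf origin (r Rn%:R) x0 ->
          Sinf om x -> ball_inf x0 ((1 - theta) * Rn%:R) x ->
          Sinf om y -> ball_inf x0 ((1 - theta) * Rn%:R) y ->
          ckhk2 * (Rn%:R) ^+ 2 <= t <= (Rn%:R) ^+ 2 ->
          qkill om (ball_inf x0 Rn%:R `&` Sinf om) t x y / deg om y
            >= ckhk1 * powR t (- (d%:R / 2)))].

Definition AN (A : set 'rV[R]_d) (N : nat) : set (pt d) :=
  [set x | exists2 a, A a & emb x = N%:R *: a].

Definition U1 om (U0 : set (pt d)) : set (pt d) := Sinf om `\` U0.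
Definition bdry om (U0 : set (pt d)) : set (pt d) :=
  [set x | U1 om U0 x /\ exists2 z, U0 z & adj x z].
Definition sigma om (U0 : set (pt d)) (l : nat) x : R :=
  card (ball_inf x (2 ^+ l) `&` U1 om U0) / card (ball_inf x (2 ^+ l) `&` Sinf om).
Definition sigmat om (U0 : set (pt d)) (l : nat) x : R :=
  card (ball_inf x (4 * 2 ^+ l) `&` U1 om U0) / card (ball_inf x (4 * 2 ^+ l) `&` Sinf om).
Definition alphat : R := (3 / 10) * (4 ^+ d)^-1.

Definition UclassN om (A : set 'rV[R]_d) (b : nat -> R) (lstar N : nat)
    (U0 : set (pt d)) : Prop :=
  U0 `<=` ball_inf origin (b N) `&` Sinf om /\
  forall x l, AN A N x -> Sinf om x -> (l <= lstar)%N -> sigma om U0 l x <= 1 / 2.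

(** the class S^omega_{U0,eps,chi}; tau_eps for the walk from x is the exit time of
    {z : |z - x|_infty < eps} *)
Definition Sclass om (U0 : set (pt d)) (eps : nat) (chi : R) (Sig : set (pt d)) : Prop :=
  [/\ (exists r : R, Sig `<=` ball_inf origin r),
      Sig `<=` Sinf om
    & forall x, bdry om U0 x ->
        chi <= hitprob om [set z | linf (z - x) < eps%:R] Sig x].

End Defs.

(* Main.v *)
Require Import Defs.
From HB Require Import structures.
From mathcomp Require Import all_boot all_order all_algebra.
From mathcomp Require Import all_classical all_reals all_analysis.
From mathcomp Require Import finmap zify ring lra.
Import Order.TTheory GRing.Theory Num.Theory.
Import numFieldNormedType.Exports.
Local Open Scope classical_set_scope.
Local Open Scope ring_scope.

Section Chain.
Context {R : realType} {d : nat} (om : config d).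
Implicit Types (x y z w : pt d) (U Sig : set (pt d)).

Lemma deg_ge0 x : 0 <= deg om x :> R.
Proof. by rewrite /deg ler0n. Qed.

Lemma avg_ge0 (f : pt d -> R) x : (forall z, Sinf om z -> 0 <= f z) -> 0 <= avg om f x.
Proof.
move=> H; rewrite /avg divr_ge0 ?deg_ge0 //; apply: sumr_ge0 => z /asboolP; exact: H.
Qed.

Lemma avg_le (f g : pt d -> R) x : (forall z, z \in nbrs x -> Sinf om z -> f z <= g z) ->
  avg om f x <= avg om g x.
Proof.
move=> H; rewrite /avg ler_wpM2r ?invr_ge0 ?deg_ge0 //.
rewrite big_seq_cond [X in _ <= X]big_seq_cond.
by apply: ler_sum => z /andP[zi /asboolP]; exact: H.
Qed.

Lemma avg_le1 (f : pt d -> R) x : (forall z, Sinf om z -> f z <= 1) -> avg om f x <= 1.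
Proof.
move=> H; rewrite /avg.
have E : \sum_(z <- nbrs x | `[< Sinf om z >]) (1 : R) = deg om x.
  by rewrite /deg -sum1_count natr_sum.
have [D0|D0] := eqVneq (deg om x : R) 0; first by rewrite D0 invr0 mulr0.
have Dp : 0 < (deg om x : R) by rewrite lt_def D0 deg_ge0.
rewrite ler_pdivrMr // mul1r -[X in _ <= X]E.
by apply: ler_sum => z /asboolP; exact: H.
Qed.

Lemma avgZ c (f : pt d -> R) x : avg om (fun z => c * f z) x = c * avg om f x.
Proof. by rewrite /avg -mulr_sumr mulrA. Qed.

Lemma avg_sum (s : seq (pt d)) (F : pt d -> pt d -> R) x :
  avg om (fun z => \sum_(w <- s) F w z) x = \sum_(w <- s) avg om (F w) x.
Proof.
rewrite /avg exchange_big /= mulr_suml; apply: eq_bigr => w _ //.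
Qed.


Lemma hitn_ge0 U Sig n x : 0 <= hitn om U Sig n x :> R.
Proof.
elim: n x => [|n IH] x /=; first by case: asboolP.
case: asboolP => // _; case: asboolP => // _; exact: avg_ge0.
Qed.

Lemma hitn_le1 U Sig n x : hitn om U Sig n x <= 1 :> R.
Proof.
elim: n x => [|n IH] x /=; first by case: asboolP.
case: asboolP => // _; case: asboolP => // _; exact: avg_le1.
Qed.

Lemma hitn_S U Sig n x : hitn om U Sig n x <= hitn om U Sig n.+1 x :> R.
Proof.
elim: n x => [|n IH] x /=.
  case: asboolP => [[HU HS]|_]; last by case: asboolP => // _; case: asboolP => // _; apply: avg_ge0 => z _; by case: asboolP.
  by do 2 (case: asboolP => //).
case: asboolP => // _; case: asboolP => // _; apply: avg_le => z _ _; exact: IH.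
Qed.

Lemma hitn_mono U Sig n m x : (n <= m)%N -> hitn om U Sig n x <= hitn om U Sig m x :> R.
Proof.
move=> /subnK <-; elim: (m - n)%N => [|k IH] //; rewrite addSn.
exact: le_trans IH (hitn_S _ _ _ _).
Qed.

Lemma hitn_monoU U U' Sig n x : U `<=` U' -> hitn om U Sig n x <= hitn om U' Sig n x :> R.
Proof.
move=> sUU'; elim: n x => [|n IH] x /=.
  case: asboolP => [[HU HS]|_]; last by case: asboolP.
  by case: asboolP => // -[]; split => //; exact: sUU'.
case: asboolP => [HU|_]; last by case: asboolP => // _; case: asboolP => // _; apply: avg_ge0 => z _; exact: hitn_ge0.
rewrite (asboolT (sUU' _ HU)).
by case: asboolP => // _; apply: avg_le => z _ _; exact: IH.
Qed.

Lemma killn_ge0 U n x y : 0 <= killn om U n x y :> R.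
Proof.
elim: n x => [|n IH] x /=; first by case: asboolP.
case: asboolP => // _; exact: avg_ge0.
Qed.

Lemma sum_killn_le1 U n x (s : seq (pt d)) : uniq s ->
  \sum_(w <- s) killn om U n x w <= 1 :> R.
Proof.
move=> us; elim: n x => [|n IH] x /=.
  apply: (@le_trans _ _ (\sum_(w <- s) ((w == x)%:R : R))).
    apply: ler_sum => w _; case: asboolP => [[_ ->]|_]; first by rewrite eqxx.
    by case: (w == x).
  rewrite -natr_sum.
  have -> : (\sum_(w <- s) (w == x : nat))%N = count_mem x s.
    by elim: (s) => [|a s' IHs]; rewrite ?big_nil ?big_cons //= IHs.
  by rewrite -[1]/(1%:R) ler_nat count_uniq_mem //; case: (x \in s).
case: asboolP => _; last by rewrite big1.
rewrite -(avg_sum s (fun w z => killn om U n z w)).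
by apply: avg_le1 => z _; exact: IH.
Qed.

Lemma killn_le1 U n x y : killn om U n x y <= 1 :> R.
Proof. by have := @sum_killn_le1 U n x [:: y] erefl; rewrite big_seq1. Qed.


Lemma adj_sym x y : y \in nbrs x -> x \in nbrs y.
Proof.
move=> /allpairsP [[i s] /= [iin sin ->]].
apply/allpairsP; exists (i, - s) => /=; split => //.
  by move: sin; rewrite !inE => /orP[] /eqP ->; rewrite ?opprK eqxx ?orbT.
by rewrite scaleNr addrK.
Qed.

Lemma killn_out U n z w : ~ U z -> killn om U n z w = 0 :> R.
Proof. by case: n => [|n] /= H; case: asboolP => // -[]. Qed.

Lemma hitn_in U Sig n z : U z -> Sig z -> hitn om U Sig n z = 1 :> R.
Proof.
case: n => [|n] /= HU HS; first by case: asboolP => // -[].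
by rewrite (asboolT HU) (asboolT HS).
Qed.

Lemma cross1 U U0 (s : seq (pt d)) n y : uniq s -> (forall w, w \in s -> U0 w) ->
  U1 om U0 y -> \sum_(w <- s) killn om U n y w <= hitn om U (bdry om U0) n y :> R.
Proof.
move=> us sU0; elim: n y => [|n IH] y Hy.
  rewrite big1_seq; first exact: hitn_ge0.
  move=> w /sU0 Hw /=; case: asboolP => // -[_ E]; subst w.
  by case: Hy.
have := @sum_killn_le1 U n.+1 y s us.
rewrite /=; case: asboolP => HU H1; last by rewrite big1.
case: asboolP => Hb //.
rewrite -(avg_sum s (fun w z => killn om U n z w)); apply: avg_le => z zin Sz.
have [Hz|Hz] := pselect (U0 z).
  by exfalso; apply: Hb; split => //; exists z.
exact: IH.
Qed.

Lemma cross2 U U0 (s : seq (pt d)) n y : uniq s -> (forall w, w \in s -> U1 om U0 w) ->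
  U0 y -> \sum_(w <- s) killn om U n y w <= hitn om U (bdry om U0) n y :> R.
Proof.
move=> us sU1; elim: n y => [|n IH] y Hy.
  rewrite big1_seq; first exact: hitn_ge0.
  move=> w /sU1 Hw /=; case: asboolP => // -[_ E]; subst w.
  by case: Hw.
rewrite /=; case: asboolP => HU; last by rewrite big1.
have nb : ~ bdry om U0 y by case => -[].
rewrite (asboolF nb).
rewrite -(avg_sum s (fun w z => killn om U n z w)); apply: avg_le => z zin Sz.
have [Hz|Hz] := pselect (U0 z); first exact: IH.
have bz : bdry om U0 z by split => //; exists y => //; exact: adj_sym.
have [HUz|HUz] := pselect (U z).
  by rewrite hitn_in //; exact: sum_killn_le1.
by rewrite big1 ?hitn_ge0 // => w _; rewrite killn_out.
Qed.

Lemma compose U U' B Sig (c : R) m n y : U' `<=` U -> 0 <= c -> c <= 1 ->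
  (forall x, U' x -> B x -> c <= hitn om U Sig m x) ->
  c * hitn om U' B n y <= hitn om U Sig (n + m) y.
Proof.
move=> sU c0 c1 H; elim: n y => [|n IH] y; rewrite [hitn om U' B _ y]/=.
  case: asboolP => [[HU HB]|_]; first by rewrite mulr1; exact: H.
  by rewrite mulr0 hitn_ge0.
case: asboolP => HU; last by rewrite mulr0 hitn_ge0.
case: asboolP => HB.
  rewrite mulr1; apply: le_trans (H _ HU HB) _; apply: hitn_mono.
  by rewrite addSn leqW // leq_addl.
rewrite addSn [hitn om U Sig _ y]/= (asboolT (sU _ HU)); case: asboolP => HS.
  apply: le_trans c1; rewrite -[X in _ <= X]mulr1 ler_wpM2l //.
  by apply: avg_le1 => z _; exact: hitn_le1.
by rewrite -avgZ; apply: avg_le => z _ _; exact: IH.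
Qed.

End Chain.
Section Pois.
Context {R : realType}.

Lemma lim_bigsum (T : Type) (W : seq T) (u : T -> R^nat) : (forall w, cvgn (u w)) ->
  cvgn (fun N => \sum_(w <- W) u w N) /\
  limn (fun N => \sum_(w <- W) u w N) = \sum_(w <- W) limn (u w).
Proof.
move=> cu; elim: W => [|a W [IHc IHl]].
  have -> : (fun N => \sum_(w <- [::]) u w N) = (fun _ => 0 : R).
    by apply/funext => N; rewrite big_nil.
  split; [exact: is_cvg_cst | rewrite big_nil; exact: lim_cst].
have -> : (fun N => \sum_(w <- a :: W) u w N) = (u a + (fun N => \sum_(w <- W) u w N)).
  by apply/funext => N; rewrite big_cons.
split; first exact: is_cvgD.
by rewrite limD // IHl big_cons.
Qed.

Definition pw (t : R) (n : nat) : R := expR (- t) * t ^+ n / (n`!)%:R.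

Lemma pw_ge0 t n : 0 <= t -> 0 <= pw t n.
Proof. by move=> t0; rewrite /pw divr_ge0 // mulr_ge0 ?expR_ge0 ?exprn_ge0. Qed.

Lemma pw_sum_le1 t N : 0 <= t -> \sum_(0 <= n < N) pw t n <= 1.
Proof.
move=> t0.
have nd : nondecreasing_seq (series (exp_coeff t)).
  apply/nondecreasing_seqP => n; rewrite /series /= big_nat_recr //= lerDl.
  by rewrite /exp_coeff /= divr_ge0 // exprn_ge0.
have := nondecreasing_cvgn_le nd (is_cvg_series_exp_coeff t) N.
rewrite -/(expR t) /series /= => H.
rewrite /pw; under eq_bigr do rewrite -mulrA.
rewrite -mulr_sumr expRN ler_pdivrMl ?expR_gt0 // mulr1.
by apply: le_trans H; apply: ler_sum => n _; rewrite /exp_coeff /=.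
Qed.


Lemma qkill_sum_le {d : nat} (om : config d) U (t : R) y (W : seq (pt d)) (H : R) :
  0 <= t -> uniq W ->
  (forall n, \sum_(w <- W) killn om U n y w <= H) ->
  \sum_(w <- W) qkill om U t y w <= H.
Proof.
move=> t0 uW HG.
pose u w := series (fun n => expR (- t) * t ^+ n / (n`!)%:R * killn om U n y w).
have term0 w n : 0 <= expR (- t) * t ^+ n / (n`!)%:R * killn om U n y w.
  by rewrite mulr_ge0 ?killn_ge0 // -/(pw t n) pw_ge0.
have cu : forall w, cvgn (u w).
  move=> w; apply: nondecreasing_is_cvgn.
    by apply/nondecreasing_seqP => n; rewrite /u /series /= big_nat_recr //= lerDl.
  exists 1 => _ [N _ <-]; rewrite /u /series /=.
  apply: le_trans (pw_sum_le1 t N t0); apply: ler_sum => n _.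
  rewrite -/(pw t n) -[X in _ <= X]mulr1 ler_wpM2l ?pw_ge0 //; exact: killn_le1.
have [c l] := @lim_bigsum _ W u cu.
rewrite (_ : \sum_(w <- W) qkill om U t y w = \sum_(w <- W) limn (u w)) // -l.
apply: limr_le => //; apply: nearW => N.
rewrite /u /series /= exchange_big /=.
apply: (@le_trans _ _ (\sum_(0 <= n < N) pw t n * H)).
  apply: ler_sum => n _; rewrite -/(pw t n).
  under eq_bigr do rewrite -/(pw t n).
  by rewrite -mulr_sumr ler_wpM2l ?pw_ge0.
have H0 : 0 <= H.
  by apply: le_trans (HG 0%N); apply: sumr_ge0 => w _; exact: killn_ge0.
by rewrite -mulr_suml -[X in _ <= X]mul1r ler_wpM2r // pw_sum_le1.
Qed.

End Pois.
Section Geom.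
Context {R : realType} {d : nat}.
Implicit Types (x y z v a b : pt d).

Lemma coord_le_linf v i : (`|v ord0 i|)%:~R <= (linf v : R).
Proof. rewrite /linf; exact: le_bigmax. Qed.

Lemma linf_ge0 v : 0 <= (linf v : R).
Proof. by have /bigmax_leP [] := lexx (linf v : R). Qed.

Lemma linf_leP v (r : R) : 0 <= r -> (forall i, (`|v ord0 i|)%:~R <= r) -> linf v <= r.
Proof. by move=> r0 H; apply/bigmax_leP; split. Qed.

Lemma linfD a b : linf (a + b) <= (linf a + linf b : R).
Proof.
apply: linf_leP; first by rewrite addr_ge0 ?linf_ge0.
move=> i; rewrite mxE; apply: le_trans (lerD (coord_le_linf a i) (coord_le_linf b i)).
by rewrite -intrD ler_int ler_normD.
Qed.

Lemma linfN a : linf (- a) = (linf a : R).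
Proof. by rewrite /linf; apply: eq_bigr => i _; rewrite mxE normrN. Qed.

Lemma linf_le_l2 v : linf v <= (l2 v : R).
Proof.
apply: linf_leP; first exact: sqrtr_ge0.
move=> i; rewrite intr_norm -sqrtr_sqr /l2 ler_sqrt; last first.
  by apply: sumr_ge0 => j _; rewrite ler0z sqr_ge0.
rewrite (bigD1 i) //= -rmorphXn /= lerDl.
by apply: sumr_ge0 => j _; rewrite ler0z sqr_ge0.
Qed.

Definition shiftf x (k n : nat) (g : {ffun 'I_d -> 'I_n}) : pt d :=
  x + \row_i ((g i : nat)%:Z - k%:Z).

Lemma ball_finite x (r : R) : finite_set (ball_inf x r).
Proof.
have [k rk] : exists k : nat, r <= k%:R.
  exists (Num.trunc `|r|).+1; apply: le_trans (ler_norm r) _.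
  by apply: ltW; rewrite truncnS_gt.
apply: (@sub_finite_set _ _ ((@shiftf x k (k.*2).+1) @` setT)); last first.
  by apply: finite_image; exact: finite_finset.
move=> z; rewrite /ball_inf /= => Hz.
have Hi i : (`|(z - x) ord0 i|)%:~R <= (k%:R : R) by apply: le_trans (coord_le_linf _ i) (le_trans Hz rk).
pose g := [ffun i : 'I_d => (inord (absz ((z - x) ord0 i + k%:Z)) : 'I_(k.*2).+1)].
exists g => //; apply/matrixP => a i; rewrite (ord1 a).
rewrite /shiftf !mxE /g ffunE.
have Hi' : `|(z - x) ord0 i| <= k%:Z by rewrite -(ler_int R); exact: Hi.
move: Hi'; rewrite mxE; set e := z ord0 i + (- x) ord0 i => He.
have /ler_normlP [Hl Hr] := He.
have H0 : 0 <= e + k%:Z by lia.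
rewrite inordK; last by rewrite ltnS; lia.
by rewrite gez0_abs // /e mxE addrK addrC subrK.
Qed.


Lemma card_ball_ge x (k : nat) : ((k.+1) ^ d)%:R <= @Defs.card R d (ball_inf x (k%:R : R)).
Proof.
rewrite /Defs.card ler_nat.
set F := fset_set (ball_inf x (k%:R : R)).
have <- : size (map (@shiftf x 0 k.+1) (enum {ffun 'I_d -> 'I_k.+1})) = (k.+1 ^ d)%N.
  by rewrite size_map -cardE card_ffun !card_ord.
apply: uniq_leq_size.
  rewrite map_inj_uniq ?enum_uniq // => g g'; rewrite /shiftf => /addrI /matrixP E.
  apply/ffunP => i; have := E ord0 i; rewrite !mxE !subr0 => /eqP.
  by rewrite eqz_nat => /eqP /val_inj.
move=> _ /mapP [g _ ->]; rewrite /F in_fset_set; last exact: ball_finite.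
apply/mem_set; rewrite /ball_inf /= /shiftf addrAC subrr add0r; apply: linf_leP => // i.
rewrite mxE subr0 -[k%:R]/((k%:Z)%:~R) ler_int. Show.
by rewrite ger0_norm // lez_nat -ltnS.
Qed.

Lemma card_split (A C : set (pt d)) : finite_set A ->
  Defs.card A = Defs.card (A `&` C) + Defs.card (A `\` C) :> R.
Proof.
move=> fA.
have fAC : finite_set (A `&` C) by exact: finite_setIl.
have -> : A `\` C = A `\` (A `&` C).
  by apply/seteqP; split => z /=; [case=> Az nC; split => // -[] | case=> Az H; split => // Cz; apply: H].
have E2 : A `&` C = A `&` (A `&` C) by rewrite setIA setIid.
rewrite /Defs.card [in X in _ = X + _]E2 fset_setI // fset_setD // -natrD cardfsID.
by [].
Qed.

End Geom.

Section Aux.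
Context {R : realType} {d : nat}.

Lemma hitn_le_hitprob (om : config d) U Sig n x :
  hitn om U Sig n x <= (hitprob om U Sig x : R).
Proof.
apply: ub_le_sup; last by exists n.
by exists 1 => _ [k _ <-]; exact: hitn_le1.
Qed.

Lemma hitprob_adh (om : config d) U Sig x (c : R) : c < hitprob om U Sig x ->
  exists n, c < hitn om U Sig n x.
Proof.
move=> H.
have hs : has_sup [set (hitn om U Sig n x : R) | n in [set: nat]].
  split; first by exists (hitn om U Sig 0 x), 0%N.
  by exists 1 => _ [k _ <-]; exact: hitn_le1.
have H' : 0 < hitprob om U Sig x - c by rewrite subr_gt0.
have [e [n _ <-]] := sup_adherent H' hs.
by rewrite opprB addrCA subrr addr0 => ?; exists n.
Qed.


Lemma powR_sq (x : R) (n : nat) : 0 < x -> powR (x ^+ 2) (- (n%:R / 2)) = (x ^+ n)^-1.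
Proof.
move=> x0.
rewrite -(powR_mulrn 2 (ltW x0)) -powRrM.
have -> : 2%:R * - (n%:R / 2) = - n%:R :> R by rewrite mulrN mulrC -mulrA mulVf ?mulr1 // pnatr_eq0.
by rewrite powR_invn // ltW.
Qed.

Lemma rscale_mono (k D r1 r2 : R) : 0 < k -> 0 <= D -> 1 <= r1 -> r1 <= r2 ->
  rscale k D r1 <= rscale k D r2.
Proof.
move=> k0 D0 r11 r12; rewrite /rscale ler_expR ler_pM2l //.
have r10 : 0 < r1 by apply: lt_le_trans r11.
have r20 : 0 < r2 by apply: lt_le_trans r12.
apply: ge0_ler_powR; rewrite ?nnegrE ?ln_ge0 ?addr_ge0 //. all: try (exact: le_trans r12).
by rewrite ler_ln ?posrE.
Qed.

End Aux.

Theorem lemma4p12 (R : realType) (d : nat) (hd : (3 <= d)%N)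
  (eta DeltaS kd2 chk6 chk1 chk2 chk3 chk4 ckhk1 ckhk2 : R)
  (heta : 0 < eta <= 1) (hDelta : 0 < DeltaS) (hkd2 : 0 < kd2) (hchk6 : 0 < chk6)
  (hchk1 : 0 < chk1) (hchk2 : 0 < chk2) (hchk3 : 0 < chk3) (hchk4 : 0 < chk4)
  (hckhk1 : 0 < ckhk1) (hckhk2 : 0 < ckhk2 <= 1)
  (A : set 'rV[R]_d) (hA : compact A) (b : nat -> R) (hb : forall N, 0 < b N) :
  let kreg : R := (2 * d%:R)^-1 * Num.min kd2 chk6 in
  exists c5 : R -> R, (forall chi, 0 < chi < 1 -> 0 < c5 chi) /\
  forall om : config d,
    Omega_reg eta DeltaS kreg chk1 chk2 chk3 chk4 ckhk1 ckhk2 (1 / 3) (1 / 9) om ->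
    exists c4 : R,
    forall (N lstar : nat) (U0 : set (pt d)) (eps : nat) (chi : R) (Sig : set (pt d))
           (l : nat) (x0 y : pt d),
      (1 <= N)%N ->
      UclassN om A b lstar N U0 ->
      0 < chi < 1 ->
      Sclass om U0 eps chi Sig ->
      c4 <= l%:R ->
      (eps%:R : R) <= 4^-1 * 2 ^+ l ->
      Sinf om x0 -> ball_inf (@origin d) (rscale kreg DeltaS (4 * 2 ^+ l)) x0 ->
      @alphat R d <= (sigmat om U0 l x0 : R) <= 1 - @alphat R d ->
      Sinf om y -> (l2 (y - x0) : R) <= 4^-1 * 2 ^+ l ->
      c5 chi <= (hitprob om (ball_inf x0 (5 * 2 ^+ l : R)) Sig y : R).
Proof.
move=> kreg.
set a0 : R := @alphat R d * ((1 - 1/3) * eta) * ckhk1 * ((8 : R) / 9) ^+ d.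
have a0p : 0 < a0.
  rewrite /a0; repeat apply: mulr_gt0 => //.
  - lra.
  - by case/andP: heta.
exists (fun chi => chi / 2 * a0); split.
  by move=> chi /andP[c0 _] /=; rewrite mulr_gt0 ?divr_gt0.
move=> om [Hne Hconn [R0d Hden] Hhk [R0k Hkhk]].
exists (Num.max R0d (Num.max R0k%:R 1)).
move=> N lstar U0 eps chi Sig l x0 y HN [HU0sub HUsig] /andP[chi0 chi1] [HSigb HSigS HSigc]
  Hc4 Heps Hx0 Hx0b /andP[Hs1 Hs2] Hy Hyx.
move: Hc4; rewrite !ge_max => /and3P[HR0d HR0k H1l].
have [l' El] : exists l', l = l'.+1.
  by exists l.-1; rewrite prednK // -(ltr_nat R); apply: lt_le_trans H1l; rewrite ltr01.
subst l.
set L : R := 2 ^+ l'.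
have L1 : 1 <= L by apply: exprn_ege1; rewrite ler1n.
have L0 : 0 < L by apply: lt_le_trans L1; rewrite ltr01.
have E2 : (2 ^+ l'.+1 : R) = 2 * L by rewrite exprS.
set Rn : nat := (9 * 2 ^ l')%N.
have ERn : (Rn%:R : R) = 9 * L by rewrite /Rn natrM natrX.
set K : nat := (8 * 2 ^ l')%N.
have EK : (4 * 2 ^+ l'.+1 : R) = K%:R by rewrite /K natrM natrX E2 -/L; lra.
have l2K : (l'.+1 <= Rn)%N.
  by rewrite /Rn (leq_trans (ltn_expl l' (isT : (1 < 2)%N))) // leq_pmull.
set U5 := ball_inf x0 (5 * 2 ^+ l'.+1 : R).
set Uk := ball_inf x0 (Rn%:R : R) `&` Sinf om.
set B4 := ball_inf x0 (4 * 2 ^+ l'.+1 : R).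
have tri : forall p q r : pt d, linf (p - r) <= linf (p - q) + (linf (q - r) : R).
  by move=> p q r; rewrite -[p - r](_ : (p - q) + (q - r) = p - r) ?linfD // addrA subrK.
have sUk5 : Uk `<=` U5.
  move=> z [Hz _]; rewrite /U5 /ball_inf /=; apply: le_trans Hz _; rewrite ERn E2; lra.
have Hm0 : forall x, exists m : nat, (Uk x /\ bdry om U0 x) -> chi / 2 <= hitn om U5 Sig m x.
  move=> x; have [[Hux Hbx]|nh] := pselect (Uk x /\ bdry om U0 x); last by exists 0%N.
  have Hc := HSigc x Hbx.
  have [m Hm] : exists m, chi / 2 < hitn om [set z | (linf (z - x) : R) < eps%:R] Sig m x.
    apply: hitprob_adh; apply: lt_le_trans Hc; lra.
  exists m => _; apply: ltW; apply: lt_le_trans Hm _; apply: hitn_monoU.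
  move=> z /= Hz; rewrite /U5 /ball_inf /=; apply: le_trans (tri _ x _) _.
  case: Hux => Hx _; move: Hx; rewrite /ball_inf /= ERn => Hx.
  move: Heps; rewrite E2 => Heps; lra.
have [mf Hmf] := choice Hm0.
have fF : finite_set (Uk `&` bdry om U0).
  by apply: finite_setIl; apply: finite_setIl; exact: ball_finite.
set F := fset_set (Uk `&` bdry om U0).
set m := (\max_(x <- F) mf x)%N.
have HB : forall x, Uk x -> bdry om U0 x -> chi / 2 <= hitn om U5 Sig m x.
  move=> x ux bx; apply: le_trans (Hmf x (conj ux bx)) _; apply: hitn_mono.
  apply: leq_bigmax_seq => //.
  by rewrite /F in_fset_set //; apply/mem_set.
set H := hitprob om U5 Sig y.
have HBn : forall n, chi / 2 * hitn om Uk (bdry om U0) n y <= H.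
  move=> n; apply: le_trans (hitn_le_hitprob om U5 Sig (n + m) y).
  apply: compose; [exact: sUk5 | lra | lra | exact: HB].
pose T := if `[< U0 y >] then U1 om U0 else U0.
set Wset := B4 `&` Sinf om `&` T.
have fW : finite_set Wset by apply: finite_setIl; apply: finite_setIl; exact: ball_finite.
set W := fset_set Wset.
have Wmem : forall w, w \in W -> Wset w.
  by move=> w; rewrite /W in_fset_set // => /set_mem.
have Hcross : forall n, \sum_(w <- W) killn om Uk n y w <= hitn om Uk (bdry om U0) n y :> R.
  move: Wmem; rewrite /Wset /T; case: asboolP => HU0y Wm n.
  - apply: cross2 => //; first exact: fset_uniq.
    by move=> w /Wm [].
  - apply: cross1 => //; first exact: fset_uniq.
    by move=> w /Wm [].
have c2 : 0 < chi / 2 by lra.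
have HQ : \sum_(w <- W) qkill om Uk ((Rn%:R : R) ^+ 2) y w <= H / (chi / 2).
  apply: qkill_sum_le; [exact: sqr_ge0 | exact: fset_uniq | move=> n].
  rewrite ler_pdivlMr // mulrC; apply: le_trans (HBn n).
  by rewrite ler_wpM2l ?(ltW c2).
have kreg0 : 0 < kreg.
  rewrite /kreg mulr_gt0 // ?invr_gt0 ?mulr_gt0 ?ltr0n //; last by rewrite lt_min hkd2 hchk6.
  by apply: leq_trans hd.
set a : R := ckhk1 * ((9 * L) ^+ d)^-1.
have Hq : forall w, w \in W -> a <= qkill om Uk ((Rn%:R : R) ^+ 2) y w.
  move=> w /Wmem [[B4w Sw] _].
  have Hk : ckhk1 * powR ((Rn%:R : R) ^+ 2) (- (d%:R / 2))
      <= qkill om Uk ((Rn%:R : R) ^+ 2) y w / deg om w.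
    have h1 : (R0k <= Rn)%N by rewrite ler_nat in HR0k; exact: leq_trans HR0k l2K.
    have h2 : ball_inf origin (rscale kreg DeltaS (Rn%:R : R)) x0.
      rewrite /ball_inf /= in Hx0b *; apply: le_trans Hx0b _.
      apply: rscale_mono => //; [exact: ltW | rewrite E2; lra | rewrite ERn E2; lra].
    have h3 : ball_inf x0 ((1 - 1 / 9) * (Rn%:R : R)) y.
      rewrite /ball_inf /=; apply: le_trans (linf_le_l2 _) _.
      apply: le_trans Hyx _; rewrite ERn E2; lra.
    have h4 : ball_inf x0 ((1 - 1 / 9) * (Rn%:R : R)) w.
      move: B4w; rewrite /B4 /ball_inf /= ERn E2 => H4; lra.
    have h5 : ckhk2 * (Rn%:R : R) ^+ 2 <= (Rn%:R : R) ^+ 2 <= (Rn%:R : R) ^+ 2.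
      apply/andP; split => //; rewrite -[X in _ <= X]mul1r ler_wpM2r ?sqr_ge0 //.
      by case/andP: hckhk2.
    exact: (Hkhk Rn h1 x0 y w _ Hx0 h2 Hy h3 Sw h4 h5).
  have Ep : powR ((Rn%:R : R) ^+ 2) (- (d%:R / 2)) = ((9 * L) ^+ d)^-1.
    by rewrite ERn powR_sq // mulr_gt0.
  have ap : 0 < a by rewrite /a mulr_gt0 // invr_gt0 exprn_gt0 // mulr_gt0.
  move: Hk; rewrite Ep -/a /deg; case: (count _ _) => [|n].
    by rewrite invr0 mulr0 => Hk; have := lt_le_trans ap Hk; rewrite ltxx.
  rewrite ler_pdivlMr ?ltr0Sn // => Hk; apply: le_trans Hk.
  by rewrite ler_peMr ?(ltW ap) // ler1n.
have sc : forall s : seq (pt d), \sum_(w <- s) a = (size s)%:R * a.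
  by elim => [|? ? IH]; rewrite ?big_nil ?big_cons ?IH /= ?mul0r // -add1n natrD mulrDl mul1r.
have HQ2 : (#|` W|)%:R * a <= \sum_(w <- W) qkill om Uk ((Rn%:R : R) ^+ 2) y w.
  rewrite -sc big_seq_cond [X in _ <= X]big_seq_cond; apply: ler_sum => w /andP[wi _].
  exact: Hq.
have cWdef : Defs.card Wset = (#|` W|)%:R :> R by [].
have EK' : (K%:R : R) = 8 * L by rewrite -EK E2; lra.
have cB : (8 * L) ^+ d <= Defs.card B4 :> R.
  rewrite /B4 EK -EK'; apply: le_trans (card_ball_ge x0 K).
  rewrite -natrX ler_nat leq_exp2r ?leqnSn //; exact: leq_trans hd.
have cBp : 0 < Defs.card B4 :> R.
  by apply: lt_le_trans cB; rewrite exprn_gt0 // mulr_gt0.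
have lK : R0d <= 4 * 2 ^+ l'.+1.
  apply: le_trans HR0d _; rewrite E2.
  have : ((l'.+1)%:R : R) <= 2 ^+ l'.+1 by rewrite -natrX ler_nat ltnW // ltn_expl.
  rewrite E2 => h; lra.
have cS : (1 - 1/3) * eta * Defs.card B4 <= Defs.card (B4 `&` Sinf om) :> R.
  have /andP[h _] := Hden (4 * 2 ^+ l'.+1) lK x0 Hx0 Hx0b.
  by move: h; rewrite -/B4 setIC ler_pdivlMr.
have cSp : 0 < Defs.card (B4 `&` Sinf om) :> R.
  apply: lt_le_trans cS; rewrite !mulr_gt0 //; [lra | by case/andP: heta].
have cW : @alphat R d * Defs.card (B4 `&` Sinf om) <= Defs.card Wset :> R.
  move: Hs1 Hs2; rewrite /sigmat -/B4 ler_pdivlMr // ler_pdivrMr // => h1 h2.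
  rewrite /Wset /T; case: asboolP => HU0y.
  - have -> : B4 `&` Sinf om `&` U1 om U0 = B4 `&` U1 om U0.
      apply/seteqP; split => z /=; first by case=> -[].
      by case=> Bz [Sz nU]; split.
    exact: h1.
  - have fA : finite_set (B4 `&` Sinf om) by apply: finite_setIl; exact: ball_finite.
    have := @card_split R d (B4 `&` Sinf om) U0 fA.
    have -> : (B4 `&` Sinf om) `\` U0 = B4 `&` U1 om U0.
      apply/seteqP; split => z /=; first by case=> -[].
      by case=> Bz [Sz nU].
    move=> E; lra.
have ap : 0 <= a by rewrite /a mulr_ge0 // ?invr_ge0 ?exprn_ge0 // ?mulr_ge0 // ltW.
have E89 : ((8 : R) / 9) ^+ d = (8 * L) ^+ d / (9 * L) ^+ d.
  by rewrite -expr_div_n; congr (_ ^+ _); field; rewrite gt_eqF.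
have Ea0 : a0 = @alphat R d * ((1 - 1 / 3) * eta) * (8 * L) ^+ d * a.
  by rewrite /a0 /a E89; ring.
have eta0 : 0 <= eta by case/andP: heta => /ltW.
have al0 : 0 <= @alphat R d by rewrite /alphat mulr_ge0 // ?invr_ge0 ?exprn_ge0 //; lra.
have Hfin : a0 <= H / (chi / 2).
  apply: le_trans HQ; apply: le_trans HQ2; rewrite Ea0 -cWdef ler_wpM2r //.
  apply: le_trans cW; rewrite -mulrA ler_wpM2l //.
  apply: le_trans cS; rewrite ler_wpM2l // mulr_ge0 //; lra.
by move: Hfin; rewrite ler_pdivlMr // mulrC.
Qed.
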